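(* Let $L=E[C_1,\dots,C_n]$ be a congruence normal lattice. Then $L$ is left modular if and only if, for every $i\in[n]$, the heart $H(C_i)$ contains an element lying on a maximal left modular chain of $E[C_1,\dots,C_{i-1}]$.
   Context: All lattices are finite. A subset $C$ of a poset is convex if $x,y\in C$ implies $[x,y]\subseteq C$. For a convex subset $C$ of a lattice $L$, let $I_L(C)=\{y\in L\mid \exists x\in C,\ y\le x\}$. The doubling $L[C]$ is the subposet of $L\times\{0<1\}$ (product order) on the set $\big(I_L(C)\times\{0\}\big)\sqcup\big(((L\setminus I_L(C))\cup C)\times\{1\}\big)$; it is a lattice. $E[\,]$ is the one-element lattice and $E[C_1,\dots,C_{i+1}]:=E[C_1,\dots,C_i][C_{i+1}]$, where each $C_{i+1}$ is a nonempty convex subset of $E[C_1,\dots,C_i]$. The heart $H(C)$ of a convex subset $C$ is the set of elements of $C$ that are below all maximal elements of $C$ and above all minimal elements of $C$. An element $a$ of a lattice is left modular if for all $b<c$ one has $(b\vee a)\wedge c=b\vee(a\wedge c)$. A maximal left modular chain is a maximal chain all of whose elements are left modular; a lattice is left modular if it has a maximal left modular chain. *)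

(* Defs.v *)
From mathcomp Require Import all_boot.
Set Implicit Arguments. Unset Strict Implicit. Unset Printing Implicit Defensive.

(* Concrete model: the doubling L[C] is a subposet of L x {0<1}, so every
   lattice E[C_1,...,C_i] is a finite subposet of {0,1}^i with the product
   order.  Elements are bit-lists (new coordinate appended at the end), a
   finite poset is a list of such elements. *)
Definition elt := seq bool.

Definition le (x y : elt) : bool := all2 implb x y.
Definition lt (x y : elt) : bool := (x != y) && le x y.

Definition is_lub (S : seq elt) (x y z : elt) : bool :=
  [&& z \in S, le x z, le y z & all (fun w => (le x w && le y w) ==> le z w) S].
Definition is_glb (S : seq elt) (x y z : elt) : bool :=
  [&& z \in S, le z x, le z y & all (fun w => (le w x && le w y) ==> le w z) S].
Definition join (S : seq elt) (x y : elt) : elt := nth [::] S (find (is_lub S x y) S).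
Definition meet (S : seq elt) (x y : elt) : elt := nth [::] S (find (is_glb S x y) S).

Definition convex (S C : seq elt) : Prop :=
  forall x y z, x \in C -> y \in C -> z \in S -> le x z -> le z y -> z \in C.

Definition downset (S C : seq elt) : seq elt :=
  [seq y <- S | has (fun x => le y x) C].

Definition doubling (S C : seq elt) : seq elt :=
  [seq rcons y false | y <- S & y \in downset S C] ++
  [seq rcons y true  | y <- S & (y \notin downset S C) || (y \in C)].

Definition Elat (Cs : seq (seq elt)) : seq elt := foldl doubling [:: [::]] Cs.

Definition valid_seq (Cs : seq (seq elt)) : Prop :=
  forall i, i < size Cs ->
    [/\ nth [::] Cs i != [::],
        {subset nth [::] Cs i <= Elat (take i Cs)} &
        convex (Elat (take i Cs)) (nth [::] Cs i)].

Definition is_maximal_in (C : seq elt) (m : elt) : bool :=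
  (m \in C) && ~~ has (fun c => lt m c) C.
Definition is_minimal_in (C : seq elt) (m : elt) : bool :=
  (m \in C) && ~~ has (fun c => lt c m) C.
Definition heart (C : seq elt) : seq elt :=
  [seq x <- C | all (fun m => is_maximal_in C m ==> le x m) C &&
                all (fun m => is_minimal_in C m ==> le m x) C].

Definition left_modular_elt (S : seq elt) (a : elt) : Prop :=
  forall b c, b \in S -> c \in S -> lt b c ->
    meet S (join S b a) c = join S b (meet S a c).

Definition chain_in (S K : seq elt) : Prop :=
  {subset K <= S} /\ (forall x y, x \in K -> y \in K -> le x y || le y x).
Definition maximal_chain (S K : seq elt) : Prop :=
  chain_in S K /\
  (forall z, z \in S -> (forall x, x \in K -> le x z || le z x) -> z \in K).

Definition maximal_left_modular_chain (S K : seq elt) : Prop :=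
  maximal_chain S K /\ (forall a, a \in K -> left_modular_elt S a).

Definition left_modular_lattice (S : seq elt) : Prop :=
  exists K, maximal_left_modular_chain S K.

(* Main.v *)
Require Import Defs.
From mathcomp Require Import all_boot.
Set Implicit Arguments. Unset Strict Implicit. Unset Printing Implicit Defensive.

Lemma le_rcons x y a b : le (rcons x a) (rcons y b) = le x y && (a ==> b).
Proof.
rewrite /le; elim: x y => [|u x IH] [|v y] //=.
- by rewrite andbT.
- by case: y => [|? ?] /=; rewrite andbF.
- by case: (x) => [|? ?] /=; rewrite andbF.
- by rewrite IH andbA.
Qed.

Lemma le_refl x : le x x.
Proof. by rewrite /le; elim: x => //= u x ->; rewrite implybb. Qed.

Lemma le_trans x y z : le x y -> le y z -> le x z.
Proof.
rewrite /le; elim: x y z => [|u x IH] [|v y] [|w z] //=.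
by case/andP=> h1 h2 /andP[h3 h4]; rewrite (IH _ _ h2 h4); case: u v w h1 h3 => [] [] [].
Qed.

Lemma le_anti x y : le x y -> le y x -> x = y.
Proof.
rewrite /le; elim: x y => [|u x IH] [|v y] //=.
by case/andP=> h1 h2 /andP[h3 h4]; rewrite (IH _ h2 h4); case: u v h1 h3 => [] [].
Qed.

Lemma rcons_inj2 (x y : elt) (a b : bool) : rcons x a = rcons y b -> x = y /\ a = b.
Proof. by move=> h; case: (rcons_inj h) => -> ->. Qed.

Lemma lt_le x y : lt x y -> le x y.
Proof. by case/andP. Qed.

Lemma join_eq S x y z : is_lub S x y z -> join S x y = z.
Proof.
move=> hz; have hh : has (is_lub S x y) S.
  by apply/hasP; exists z => //; case/and4P: hz.
have := nth_find [::] hh; rewrite -/(join S x y).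
case/and4P: hz => zS xz yz /allP hz.
case/and4P => jS xj yj /allP hj.
apply: le_anti.
  by have := hj z zS; rewrite xz yz.
by have := hz _ jS; rewrite xj yj.
Qed.

Lemma meet_eq S x y z : is_glb S x y z -> meet S x y = z.
Proof.
move=> hz; have hh : has (is_glb S x y) S.
  by apply/hasP; exists z => //; case/and4P: hz.
have := nth_find [::] hh; rewrite -/(meet S x y).
case/and4P: hz => zS xz yz /allP hz.
case/and4P => jS xj yj /allP hj.
apply: le_anti.
  by have := hz _ jS; rewrite xj yj.
by have := hj z zS; rewrite xz yz.
Qed.

Definition lat S := forall x y, x \in S -> y \in S ->
  has (is_lub S x y) S && has (is_glb S x y) S.

Section Lat.
Variable S : seq elt.
Hypothesis latS : lat S.

Lemma joinP x y : x \in S -> y \in S -> is_lub S x y (join S x y).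
Proof. by move=> xS yS; apply: nth_find; case/andP: (latS xS yS). Qed.
Lemma meetP x y : x \in S -> y \in S -> is_glb S x y (meet S x y).
Proof. by move=> xS yS; apply: nth_find; case/andP: (latS xS yS). Qed.

Lemma join_in x y : x \in S -> y \in S -> join S x y \in S.
Proof. by move=> xS yS; case/and4P: (joinP xS yS). Qed.
Lemma join_l x y : x \in S -> y \in S -> le x (join S x y).
Proof. by move=> xS yS; case/and4P: (joinP xS yS). Qed.
Lemma join_r x y : x \in S -> y \in S -> le y (join S x y).
Proof. by move=> xS yS; case/and4P: (joinP xS yS). Qed.
Lemma join_min x y w : x \in S -> y \in S -> w \in S -> le x w -> le y w ->
  le (join S x y) w.
Proof.
move=> xS yS wS h1 h2; case/and4P: (joinP xS yS) => _ _ _ /allP /(_ w wS).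
by rewrite h1 h2.
Qed.
Lemma meet_in x y : x \in S -> y \in S -> meet S x y \in S.
Proof. by move=> xS yS; case/and4P: (meetP xS yS). Qed.
Lemma meet_l x y : x \in S -> y \in S -> le (meet S x y) x.
Proof. by move=> xS yS; case/and4P: (meetP xS yS). Qed.
Lemma meet_r x y : x \in S -> y \in S -> le (meet S x y) y.
Proof. by move=> xS yS; case/and4P: (meetP xS yS). Qed.
Lemma meet_max x y w : x \in S -> y \in S -> w \in S -> le w x -> le w y ->
  le w (meet S x y).
Proof.
move=> xS yS wS h1 h2; case/and4P: (meetP xS yS) => _ _ _ /allP /(_ w wS).
by rewrite h1 h2.
Qed.

Lemma join_absorb x y : x \in S -> y \in S -> le y x -> join S x y = x.
Proof.
move=> xS yS h; apply: le_anti; last exact: join_l.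
by apply: join_min => //; apply: le_refl.
Qed.
Lemma meet_absorb x y : x \in S -> y \in S -> le x y -> meet S y x = x.
Proof.
move=> xS yS h; apply: le_anti; first exact: meet_r.
by apply: meet_max => //; apply: le_refl.
Qed.

Lemma LM_le a b c : left_modular_elt S a -> a \in S -> b \in S -> c \in S ->
  le b c -> meet S (join S b a) c = join S b (meet S a c).
Proof.
move=> hlm aS bS cS bc; case: (eqVneq b c) => [eb|nbc].
  subst c.
  rewrite (meet_absorb (bS) (join_in bS aS) (join_l bS aS)).
  by rewrite join_absorb // ?meet_in // meet_r.
by apply: hlm => //; rewrite /lt nbc.
Qed.
End Lat.

Lemma mem_cons_r (m x : elt) s : m \in s -> m \in x :: s.
Proof. by move=> h; rewrite inE h orbT. Qed.

Lemma lt_trans_le x y z : lt x y -> le y z -> lt x z.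
Proof.
case/andP=> nxy xy yz; rewrite /lt (le_trans xy yz) andbT.
apply: contra nxy => /eqP exz; subst z; apply/eqP; exact: le_anti.
Qed.

Lemma le_trans_lt x y z : le x y -> lt y z -> lt x z.
Proof.
move=> xy /andP[nyz yz]; rewrite /lt (le_trans xy yz) andbT.
apply: contra nyz => /eqP exz; subst z; apply/eqP; exact: le_anti.
Qed.

Lemma ltxx x : lt x x = false.
Proof. by rewrite /lt eqxx. Qed.

Lemma count_lt_sub (s : seq elt) (a b : pred elt) c :
  (forall z, a z -> b z) -> c \in s -> b c -> ~~ a c -> count a s < count b s.
Proof.
move=> hab; elim: s => //= y s IH; rewrite inE => /orP[/eqP ec|cs] bc nac.
  subst y; rewrite (negbTE nac) bc add0n add1n ltnS.
  by apply: sub_count => z /hab.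
have ayb : a y <= b y by case ay: (a y) => //; rewrite (hab _ ay).
by have := leq_add ayb (IH cs bc nac); rewrite addnS.
Qed.

Lemma exists_max (C : seq elt) m : m \in C ->
  exists M, is_maximal_in C M /\ le m M.
Proof.
move=> mC; move: (leqnn (count (lt m) C)).
move: {2}(count (lt m) C) => n; elim: n m mC => [|n IH] m mC hn.
  exists m; split; last exact: le_refl.
  by rewrite /is_maximal_in mC has_count -leqNgt.
case hm: (has (lt m) C).
  case/hasP: hm => c cC mc.
  have hlt : count (lt c) C < count (lt m) C.
    apply: (count_lt_sub (c:=c)) => //; last by rewrite ltxx.
    by move=> z cz; apply: lt_trans_le mc (lt_le cz).
  have [M [hM cM]] := IH c cC (leq_trans (leq_trans hlt hn) (leqnn _)).
  + exists M; split => //; exact: le_trans (lt_le mc) cM.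
exists m; split; last exact: le_refl.
by rewrite /is_maximal_in mC hm.
Qed.

Lemma exists_min (C : seq elt) m : m \in C ->
  exists M, is_minimal_in C M /\ le M m.
Proof.
move=> mC; move: (leqnn (count (fun z => lt z m) C)).
move: {2}(count (fun z => lt z m) C) => n; elim: n m mC => [|n IH] m mC hn.
  exists m; split; last exact: le_refl.
  by rewrite /is_minimal_in mC has_count -leqNgt.
case hm: (has (fun z => lt z m) C).
  case/hasP: hm => c cC mc.
  have hlt : count (fun z => lt z c) C < count (fun z => lt z m) C.
    apply: (count_lt_sub (c:=c)) => //; last by rewrite ltxx.
    by move=> z cz; apply: lt_trans_le cz (lt_le mc).
  have [M [hM cM]] := IH c cC (leq_trans (leq_trans hlt hn) (leqnn _)).
  + exists M; split => //; exact: le_trans cM (lt_le mc).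
exists m; split; last exact: le_refl.
by rewrite /is_minimal_in mC hm.
Qed.

Lemma chain_max (s : seq elt) : s != [::] ->
  (forall x y, x \in s -> y \in s -> le x y || le y x) ->
  exists2 m, m \in s & forall y, y \in s -> le y m.
Proof.
elim: s => // x s IH _ hch.
case s0: (s == [::]).
  move/eqP: s0 => ->; exists x; first by rewrite inE.
  by move=> y; rewrite inE => /eqP ->; apply: le_refl.
have [m ms hm] : exists2 m, m \in s & forall y, y \in s -> le y m.
  by apply: IH; [rewrite s0 | move=> u v us vs; apply: hch; rewrite inE ?us ?vs orbT].
case/orP: (hch x m (mem_head _ _) (mem_cons_r x ms)) => hxm.
  exists m; first exact: mem_cons_r.
  by move=> y; rewrite inE => /orP[/eqP ->|]; [|apply: hm].
exists x; first exact: mem_head.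
by move=> y; rewrite inE => /orP[/eqP ->|ys]; [apply: le_refl|apply: le_trans (hm _ ys) hxm].
Qed.

Lemma chain_min (s : seq elt) : s != [::] ->
  (forall x y, x \in s -> y \in s -> le x y || le y x) ->
  exists2 m, m \in s & forall y, y \in s -> le m y.
Proof.
elim: s => // x s IH _ hch.
case s0: (s == [::]).
  move/eqP: s0 => ->; exists x; first by rewrite inE.
  by move=> y; rewrite inE => /eqP ->; apply: le_refl.
have [m ms hm] : exists2 m, m \in s & forall y, y \in s -> le m y.
  by apply: IH; [rewrite s0 | move=> u v us vs; apply: hch; rewrite inE ?us ?vs orbT].
case/orP: (hch x m (mem_head _ _) (mem_cons_r x ms)) => hxm.
  exists x; first exact: mem_head.
  by move=> y; rewrite inE => /orP[/eqP ->|ys]; [apply: le_refl|apply: le_trans hxm (hm _ ys)].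
exists m; first exact: mem_cons_r.
by move=> y; rewrite inE => /orP[/eqP ->|]; [|apply: hm].
Qed.

Lemma heartP x C : x \in heart C ->
  [/\ x \in C, (forall M, M \in C -> is_maximal_in C M -> le x M) &
      (forall m, m \in C -> is_minimal_in C m -> le m x)].
Proof.
rewrite /heart mem_filter => /andP[/andP[/allP h1 /allP h2] xC]; split => //.
  by move=> M MC hM; have := h1 M MC; rewrite hM.
by move=> m mC hm; have := h2 m mC; rewrite hm.
Qed.

Lemma heartI x C : x \in C ->
  (forall M, M \in C -> is_maximal_in C M -> le x M) ->
  (forall m, m \in C -> is_minimal_in C m -> le m x) -> x \in heart C.
Proof.
move=> xC h1 h2; rewrite /heart mem_filter xC andbT; apply/andP; split; apply/allP.
  by move=> M MC; apply/implyP; apply: h1.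
by move=> m mC; apply/implyP; apply: h2.
Qed.

Definition proj (z : elt) : elt := take (size z).-1 z.

Lemma proj_rcons y b : proj (rcons y b) = y.
Proof. by rewrite /proj size_rcons /= -cats1 take_size_cat. Qed.

Definition liftc (K : seq elt) (x : elt) : seq elt :=
  [seq rcons k false | k <- K & le k x] ++ [seq rcons k true | k <- K & le x k].

Lemma mem_liftc K x y b :
  (rcons y b \in liftc K x) = (y \in K) && (if b then le x y else le y x).
Proof.
rewrite /liftc mem_cat; case: b.
- have -> : (rcons y true \in [seq rcons k false | k <- K & le k x]) = false.
    by apply/mapP => -[z _ /rcons_inj2 []].
  by rewrite /= (mem_map (@rcons_injl _ true)) mem_filter andbC.
- have -> : (rcons y false \in [seq rcons k true | k <- K & le x k]) = false.
    by apply/mapP => -[z _ /rcons_inj2 []].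
  by rewrite orbF (mem_map (@rcons_injl _ false)) mem_filter andbC.
Qed.

Lemma liftc_inv K x w : w \in liftc K x -> exists y b, w = rcons y b.
Proof. rewrite /liftc mem_cat => /orP[] /mapP [z _ ->]; by exists z; eexists. Qed.

Section Doubling.
Variables S C : seq elt.
Hypothesis latS : lat S.
Hypothesis C0 : C != [::].
Hypothesis CS : {subset C <= S}.
Hypothesis cvx : convex S C.

Definition inD y := y \in downset S C.
Definition inU y := (y \notin downset S C) || (y \in C).
Local Notation T := (doubling S C).

Lemma inDP y : inD y = (y \in S) && has (le y) C.
Proof. by rewrite /inD /downset mem_filter andbC. Qed.

Lemma inD_S y : inD y -> y \in S.
Proof. by rewrite inDP => /andP[]. Qed.

Lemma C_D y : y \in C -> inD y.
Proof. by move=> yC; rewrite inDP CS //=; apply/hasP; exists y => //; apply: le_refl. Qed.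

Lemma C_U y : y \in C -> inU y.
Proof. by move=> yC; rewrite /inU yC orbT. Qed.

Lemma D_down y z : inD z -> y \in S -> le y z -> inD y.
Proof.
rewrite !inDP => /andP[_ /hasP[c cC zc]] yS yz; rewrite yS /=.
by apply/hasP; exists c => //; apply: le_trans yz zc.
Qed.

Lemma U_up y z : inU y -> y \in S -> z \in S -> le y z -> inU z.
Proof.
rewrite /inU => hy yS zS yz; case zD: (z \in downset S C) => //=.
have yD : inD y by apply: (D_down zD).
move: hy; rewrite /inD in yD; rewrite yD /= => yC.
move: zD; rewrite -/(inD z) inDP => /andP[_ /hasP[c cC zc]].
exact: (cvx yC cC zS yz zc).
Qed.

Lemma DU_C y : inD y -> inU y -> y \in C.
Proof. by rewrite /inU /inD => ->. Qed.

Lemma notD_U y : ~~ inD y -> inU y.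
Proof. by rewrite /inU /inD => ->. Qed.

Lemma memT y b : (rcons y b \in T) = (y \in S) && (if b then inU y else inD y).
Proof.
rewrite /doubling mem_cat; case: b.
- have -> : (rcons y true \in [seq rcons y0 false | y0 <- S & y0 \in downset S C]) = false.
    by apply/mapP => -[z _ /rcons_inj2 []].
  by rewrite /= (mem_map (@rcons_injl _ true)) mem_filter andbC.
- have -> : (rcons y false \in [seq rcons y0 true | y0 <- S & (y0 \notin downset S C) || (y0 \in C)]) = false.
    by apply/mapP => -[z _ /rcons_inj2 []].
  by rewrite orbF (mem_map (@rcons_injl _ false)) mem_filter andbC.
Qed.

Lemma T_inv w : w \in T -> exists y b, w = rcons y b.
Proof.
rewrite /doubling mem_cat => /orP[] /mapP [z _ ->]; by exists z; eexists.
Qed.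

Lemma lubT x y a b : rcons x a \in T -> rcons y b \in T ->
  is_lub T (rcons x a) (rcons y b)
    (rcons (join S x y) (a || b || ~~ inD (join S x y))).
Proof.
rewrite !memT => /andP[xS ha] /andP[yS hb].
have jS := join_in latS xS yS.
apply/and4P; split.
- rewrite memT jS /=; case E: (a || b || ~~ inD (join S x y)).
  + case/orP: E => [/orP[]|]; last exact: notD_U.
    * move=> ea; rewrite ea in ha; apply: U_up ha xS jS (join_l latS xS yS).
    * move=> eb; rewrite eb in hb; apply: U_up hb yS jS (join_r latS xS yS).
  + by move: E; case: (inD (join S x y)); rewrite ?orbT.
- by rewrite le_rcons join_l //=; case: a {ha}.
- by rewrite le_rcons join_r //=; case: a {ha}; case: b {hb}.
- apply/allP => w /[dup] wT /T_inv [z [c ew]]; subst w.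
  move: wT; rewrite memT => /andP[zS hc].
  rewrite !le_rcons; apply/implyP => /andP[/andP[xz ha'] /andP[yz hb']].
  rewrite (join_min latS xS yS zS xz yz) /=.
  case: c hc ha' hb' => hc ha' hb'; first by rewrite implybT.
  move: ha' hb'; case: a {ha}; case: b {hb} => //= _ _.
  by rewrite (D_down hc jS (join_min latS xS yS zS xz yz)).
Qed.

Lemma glbT x y a b : rcons x a \in T -> rcons y b \in T ->
  is_glb T (rcons x a) (rcons y b)
    (rcons (meet S x y) [&& a, b & inU (meet S x y)]).
Proof.
rewrite !memT => /andP[xS ha] /andP[yS hb].
have mS := meet_in latS xS yS.
apply/and4P; split.
- rewrite memT mS /=; case E: [&& a, b & inU (meet S x y)].
  + by case/and3P: E.
  + move: E; case: a ha => ha; last by move=> _; apply: D_down ha mS (meet_l latS xS yS).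
    case: b hb => hb; last by move=> _; apply: D_down hb mS (meet_r latS xS yS).
    by rewrite /= /inU => /norP[/negbNE].
- by rewrite le_rcons meet_l //=; case: a {ha} => //; case: b {hb} => //; rewrite implybT.
- by rewrite le_rcons meet_r //=; case: a {ha} => //; case: b {hb} => //; rewrite implybT.
- apply/allP => w /[dup] wT /T_inv [z [c ew]]; subst w.
  move: wT; rewrite memT => /andP[zS hc].
  rewrite !le_rcons; apply/implyP => /andP[/andP[zx ha'] /andP[zy hb']].
  rewrite (meet_max latS xS yS zS zx zy) /=.
  case: c hc ha' hb' => hc ha' hb' //.
  move: ha' hb'; case: a {ha}; case: b {hb} => //= _ _.
  exact: (U_up hc zS mS (meet_max latS xS yS zS zx zy)).
Qed.

Lemma joinT x y a b : rcons x a \in T -> rcons y b \in T ->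
  join T (rcons x a) (rcons y b) =
    rcons (join S x y) (a || b || ~~ inD (join S x y)).
Proof. by move=> h1 h2; apply/join_eq/lubT. Qed.

Lemma meetT x y a b : rcons x a \in T -> rcons y b \in T ->
  meet T (rcons x a) (rcons y b) =
    rcons (meet S x y) [&& a, b & inU (meet S x y)].
Proof. by move=> h1 h2; apply/meet_eq/glbT. Qed.

Lemma latT : lat T.
Proof.
move=> p q pT qT.
case: (T_inv pT) => x [a ep]; case: (T_inv qT) => y [b eq]; subst p q.
apply/andP; split; apply/hasP.
  by eexists; last exact: lubT; case/and4P: (lubT pT qT).
by eexists; last exact: glbT; case/and4P: (glbT pT qT).
Qed.


Lemma joinT_in x y a b : rcons x a \in T -> rcons y b \in T ->
  rcons (join S x y) (a || b || ~~ inD (join S x y)) \in T.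
Proof. by move=> h1 h2; case/and4P: (lubT h1 h2). Qed.

Lemma meetT_in x y a b : rcons x a \in T -> rcons y b \in T ->
  rcons (meet S x y) [&& a, b & inU (meet S x y)] \in T.
Proof. by move=> h1 h2; case/and4P: (glbT h1 h2). Qed.

Lemma memT_S y b : rcons y b \in T -> y \in S.
Proof. by rewrite memT => /andP[]. Qed.

Lemma lm_proj a al : rcons a al \in T -> left_modular_elt T (rcons a al) ->
  left_modular_elt S a.
Proof.
move=> aT hlm b c bS cS /andP[nbc bc].
have bT : rcons b (~~ inD b) \in T.
  by rewrite memT bS /=; case hb: (inD b) => //=; apply: notD_U; rewrite hb.
have cT : rcons c (inU c) \in T.
  rewrite memT cS /=; case hc: (inU c) => //.
  by move: hc; rewrite /inU /inD; case: (c \in downset S C).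
have hlt : lt (rcons b (~~ inD b)) (rcons c (inU c)).
  rewrite /lt le_rcons bc /=; apply/andP; split.
    by apply: contra nbc => /eqP /rcons_inj2 [-> _].
  apply/implyP => nb; apply: notD_U; apply: contra nb => cD.
  exact: D_down cD bS bc.
have := hlm _ _ bT cT hlt.
rewrite (joinT bT aT) (meetT (joinT_in bT aT) cT) (meetT aT cT).
rewrite (joinT bT (meetT_in aT cT)).
by case/rcons_inj2.
Qed.

Lemma lm0_join x w : rcons x false \in T -> left_modular_elt T (rcons x false) ->
  w \in C -> inD (join S w x).
Proof.
move=> xT hlm wC; have wS := CS wC; have xS := memT_S xT.
have w0T : rcons w false \in T by rewrite memT wS /= C_D.
have w1T : rcons w true \in T by rewrite memT wS /= C_U.
have hlt : lt (rcons w false) (rcons w true).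
  by rewrite /lt le_rcons le_refl andbT; apply/eqP => /rcons_inj2 [].
have := hlm _ _ w0T w1T hlt.
rewrite (joinT w0T xT) (meetT (joinT_in w0T xT) w1T) (meetT xT w1T).
rewrite (joinT w0T (meetT_in xT w1T)).
have jS := join_in latS wS xS.
rewrite (meet_absorb latS wS jS (join_l latS wS xS)).
rewrite (join_absorb latS wS (meet_in latS xS wS) (meet_r latS xS wS)).
rewrite (C_U wC) (C_D wC) /= andbT => /rcons_inj2 [_].
by case: (inD _).
Qed.

Lemma lm1_meet y w : rcons y true \in T -> left_modular_elt T (rcons y true) ->
  w \in C -> inU (meet S y w).
Proof.
move=> yT hlm wC; have wS := CS wC; have yS := memT_S yT.
have w0T : rcons w false \in T by rewrite memT wS /= C_D.
have w1T : rcons w true \in T by rewrite memT wS /= C_U.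
have hlt : lt (rcons w false) (rcons w true).
  by rewrite /lt le_rcons le_refl andbT; apply/eqP => /rcons_inj2 [].
have := hlm _ _ w0T w1T hlt.
rewrite (joinT w0T yT) (meetT (joinT_in w0T yT) w1T) (meetT yT w1T).
rewrite (joinT w0T (meetT_in yT w1T)).
have jS := join_in latS wS yS.
rewrite (meet_absorb latS wS jS (join_l latS wS yS)).
rewrite (join_absorb latS wS (meet_in latS yS wS) (meet_r latS yS wS)).
rewrite (C_U wC) (C_D wC) /= => /rcons_inj2 [_].
by rewrite orbF => <-.
Qed.

Lemma lm_lift0 k x : k \in S -> left_modular_elt S k -> x \in heart C -> le k x ->
  left_modular_elt T (rcons k false).
Proof.
move=> kS hk hx kx p q pT qT hpq.
case/heartP: hx => xC hmax _.
case: (T_inv pT) => b [be ep]; case: (T_inv qT) => c [ga eq]; subst p q.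
have kT : rcons k false \in T by rewrite memT kS /=; apply: D_down (C_D xC) kS kx.
move: hpq => /andP [_]; rewrite le_rcons => /andP[bc hbg].
have bS := memT_S pT; have cS := memT_S qT.
rewrite (joinT pT kT) (meetT (joinT_in pT kT) qT) (meetT kT qT).
rewrite (joinT pT (meetT_in kT qT)).
have jS := join_in latS bS kS.
have mc : le (meet S (join S b k) c) c by apply: meet_r.
have mj : le (meet S (join S b k) c) (join S b k) by apply: meet_l.
rewrite (LM_le latS hk kS bS cS bc) in mc mj *.
have mS := join_in latS bS (meet_in latS kS cS).
have bm : le b (join S b (meet S k c)) by apply: join_l => //; apply: meet_in.
set m := join S b (meet S k c) in mc mj mS bm *.
congr rcons; rewrite /= !orbF.
case: be pT hbg => pT hbg.
  case: ga qT hbg => // qT _ /=.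
  move: pT; rewrite memT => /andP[_ hb]; exact: (U_up hb bS mS bm).
move: pT; rewrite memT => /andP[_ hb] /=.
case hmD: (inD m) => /=.
  apply/negP => /and3P[njD hg hmU].
  have mC := DU_C hmD hmU.
  have [M [hM mM]] := exists_max mC.
  have MC : M \in C by case/andP: hM.
  have xM := hmax M MC hM.
  have jM : le (join S b k) M.
    apply: join_min => //; first exact: CS.
      exact: le_trans bm mM.
    exact: le_trans kx xM.
  by move: njD; rewrite (D_down (C_D MC) jS jM).
have njD : ~~ inD (join S b k) by apply: contraFN hmD => hj; apply: D_down hj mS mj.
rewrite njD /= (notD_U (negbT hmD)) andbT.
case: ga qT {hbg} => // qT.
move: qT; rewrite memT => /andP[_ hc].
by move: hmD; rewrite (D_down hc mS mc).
Qed.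

Lemma lm_lift1 k x : k \in S -> left_modular_elt S k -> x \in heart C -> le x k ->
  left_modular_elt T (rcons k true).
Proof.
move=> kS hk hx xk p q pT qT hpq.
case/heartP: hx => xC _ hmin.
have xS := CS xC.
case: (T_inv pT) => b [be ep]; case: (T_inv qT) => c [ga eq]; subst p q.
have kT : rcons k true \in T by rewrite memT kS /=; apply: U_up (C_U xC) xS kS xk.
move: hpq => /andP [_]; rewrite le_rcons => /andP[bc hbg].
have bS := memT_S pT; have cS := memT_S qT.
rewrite (joinT pT kT) (meetT (joinT_in pT kT) qT) (meetT kT qT).
rewrite (joinT pT (meetT_in kT qT)).
have mc : le (meet S (join S b k) c) c by apply: meet_r => //; apply: join_in.
rewrite (LM_le latS hk kS bS cS bc) in mc *.
have kcS := meet_in latS kS cS.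
have mS := join_in latS bS kcS.
have bm : le b (join S b (meet S k c)) by apply: join_l.
have kcm : le (meet S k c) (join S b (meet S k c)) by apply: join_r.
set m := join S b (meet S k c) in mc mS bm kcm *.
congr rcons; rewrite orbT /=.
case: ga qT hbg => qT hbg.
  case hU: (inU m).
    case hD: (inD m); last by rewrite orbT.
    have mC := DU_C hD hU.
    have [mu [hmu mum]] := exists_min mC.
    have muC : mu \in C by case/andP: hmu.
    have mux := hmin mu muC hmu.
    have mukc : le mu (meet S k c).
      apply: meet_max => //; first exact: CS.
        exact: le_trans mux xk.
      exact: le_trans mum mc.
    by rewrite (U_up (C_U muC) (CS muC) kcS mukc) orbT.
  case: be pT {hbg} => pT.
    by move: pT; rewrite memT => /andP[_ hb]; move: hU; rewrite (U_up hb bS mS bm).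
  have -> : inU (meet S k c) = false.
    by apply: contraFF hU => h; apply: U_up h kcS mS kcm.
  by move: hU; rewrite /inU /inD; case: (m \in downset S C).
move: hbg; case: be pT => // pT _ /=.
move: qT; rewrite memT => /andP[_ hc].
by rewrite (D_down hc mS mc).
Qed.

Lemma key_bwd x K : x \in heart C -> maximal_left_modular_chain S K -> x \in K ->
  left_modular_lattice T.
Proof.
move=> hx [[[sub ch] mx] lm] xK.
have [xC _ _] := heartP hx.
have xS := CS xC.
exists (liftc K x); split; [split; [split|] |].
- move=> w /[dup] wK /liftc_inv [y [b ew]]; subst w.
  move: wK; rewrite mem_liftc => /andP[yK hb].
  have yS := sub _ yK.
  rewrite memT yS /=; case: b hb => hb.
    exact: U_up (C_U xC) xS yS hb.
  exact: D_down (C_D xC) yS hb.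
- move=> w1 w2 /[dup] w1K /liftc_inv [y1 [b1 e1]] /[dup] w2K /liftc_inv [y2 [b2 e2]].
  subst w1 w2; move: w1K w2K; rewrite !mem_liftc !le_rcons.
  move=> /andP[y1K h1] /andP[y2K h2].
  case: b1 h1; case: b2 h2 => h2 h1; rewrite ?andbT ?andbF ?orbF //=; try exact: ch.
  + exact: le_trans h2 h1.
  + exact: le_trans h1 h2.
- move=> z /[dup] zT /T_inv [y [b ez]] hz; subst z.
  have yS := memT_S zT.
  have yK : y \in K.
    apply: mx => // k kK.
    case/orP: (ch _ _ kK xK) => hk.
      have := hz (rcons k false); rewrite mem_liftc kK hk !le_rcons => /(_ isT).
      by case/orP => /andP[-> _]; rewrite ?orbT.
    have := hz (rcons k true); rewrite mem_liftc kK hk !le_rcons => /(_ isT).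
    by case/orP => /andP[-> _]; rewrite ?orbT.
  rewrite mem_liftc yK /=; case: b zT hz => zT hz.
    have := hz (rcons x false); rewrite mem_liftc xK le_refl !le_rcons => /(_ isT).
    by rewrite andbF orbF => /andP[].
  have := hz (rcons x true); rewrite mem_liftc xK le_refl !le_rcons => /(_ isT).
  by rewrite andbF /= andbT.
- move=> w /[dup] wK /liftc_inv [y [b ew]]; subst w.
  move: wK; rewrite mem_liftc => /andP[yK hb].
  case: b hb => hb.
    exact: lm_lift1 (sub _ yK) (lm _ yK) hx hb.
  exact: lm_lift0 (sub _ yK) (lm _ yK) hx hb.
Qed.

Lemma key_fwd : left_modular_lattice T ->
  exists x K, x \in heart C /\ maximal_left_modular_chain S K /\ x \in K.
Proof.
case=> K' [[[sub ch] mx] lm].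
set K := map proj K'.
have inK y b : rcons y b \in K' -> y \in K.
  by move=> h; rewrite -(proj_rcons y b); apply: map_f.
have memK y : y \in K -> exists b, rcons y b \in K'.
  case/mapP => w wK ->; case: (T_inv (sub _ wK)) => z [b ew]; subst w.
  by exists b; rewrite proj_rcons.
have chK : forall y y', y \in K -> y' \in K -> le y y' || le y' y.
  move=> y y' /memK [b hb] /memK [b' hb'].
  by case/orP: (ch _ _ hb hb'); rewrite le_rcons => /andP[-> _]; rewrite ?orbT.
have KS : {subset K <= S}.
  by move=> y /memK [b hb]; apply: memT_S (sub _ hb).
have hmlc : maximal_left_modular_chain S K.
  split; [split; [split|] |] => //.
    move=> z zS hz.
    have hzK y b : rcons y b \in K' -> le y z || le z y.
      by move=> h; apply: hz; apply: inK h.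
    case E: (has (fun w => last false w && ~~ le z (proj w)) K').
      case/hasP: E => w wK; case: (T_inv (sub _ wK)) => y [b ew]; subst w.
      rewrite last_rcons proj_rcons => /andP[eb nzy]; rewrite {}eb in wK.
      have yz : le y z by move: (hzK _ _ wK); rewrite (negbTE nzy) orbF.
      have yU : inU y by move: (sub _ wK); rewrite memT => /andP[].
      have zT : rcons z true \in T by rewrite memT zS /=; apply: U_up yU (KS _ (inK _ _ wK)) zS yz.
      apply: (inK z true); apply: mx => // w' w'K.
      case: (T_inv (sub _ w'K)) => y' [b' ew']; subst w'.
      case: b' w'K => w'K; rewrite !le_rcons ?andbT ?andbF ?orbF /=.
        exact: hzK w'K.
      case/orP: (ch _ _ w'K wK); rewrite !le_rcons ?andbT ?andbF ?orbF //=.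
      by move=> h; apply: le_trans h yz.
    have hzy y : rcons y true \in K' -> le z y.
      move=> h; apply/negPn; apply: contraFN E => nzy.
      by apply/hasP; exists (rcons y true) => //; rewrite last_rcons proj_rcons.
    case hD: (inD z).
      have zT : rcons z false \in T by rewrite memT zS.
      apply: (inK z false); apply: mx => // w' w'K.
      case: (T_inv (sub _ w'K)) => y' [b' ew']; subst w'.
      case: b' w'K => w'K; rewrite !le_rcons ?andbT ?andbF ?orbF /=.
        by rewrite hzy.
      exact: hzK w'K.
    have zT : rcons z true \in T by rewrite memT zS /=; apply: notD_U; rewrite hD.
    apply: (inK z true); apply: mx => // w' w'K.
    case: (T_inv (sub _ w'K)) => y' [b' ew']; subst w'.
    case: b' w'K => w'K; rewrite !le_rcons ?andbT ?andbF ?orbF /=.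
      exact: hzK w'K.
    have y'D : inD y' by move: (sub _ w'K); rewrite memT => /andP[].
    case/orP: (hzK _ _ w'K) => // zy.
    by move: hD; rewrite (D_down y'D zS zy).
  move=> y /memK [b hb]; exact: lm_proj (sub _ hb) (lm _ hb).
suff [c0 [h0 h1]] : exists c0, rcons c0 false \in K' /\ rcons c0 true \in K'.
  exists c0, K; split; last by split => //; apply: inK h0.
  have c0D : inD c0 by move: (sub _ h0); rewrite memT => /andP[].
  have c0U : inU c0 by move: (sub _ h1); rewrite memT => /andP[].
  have c0S : c0 \in S by apply: memT_S (sub _ h0).
  apply: heartI; first exact: DU_C.
    move=> M MC /[dup] hM /andP[_ nM].
    have MS := CS MC.
    have jD := lm0_join (sub _ h0) (lm _ h0) MC.
    have jS := join_in latS MS c0S.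
    have jC : join S M c0 \in C.
      by apply: DU_C => //; apply: U_up c0U c0S jS (join_r latS MS c0S).
    have : ~~ lt M (join S M c0) by apply: contra nM => h; apply/hasP; exists (join S M c0).
    rewrite /lt (join_l latS MS c0S) andbT negbK => /eqP ->.
    exact: join_r.
  move=> m mC /[dup] hm /andP[_ nm].
  have mS := CS mC.
  have mU := lm1_meet (sub _ h1) (lm _ h1) mC.
  have kS := meet_in latS c0S mS.
  have kC : meet S c0 m \in C.
    by apply: DU_C => //; apply: D_down (C_D mC) kS (meet_r latS c0S mS).
  have : ~~ lt (meet S c0 m) m by apply: contra nm => h; apply/hasP; exists (meet S c0 m).
  rewrite /lt (meet_r latS c0S mS) andbT negbK => /eqP <-.
  exact: meet_l.
set A := [seq y <- K | rcons y false \in K'].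
set B := [seq y <- K | rcons y true \in K'].
have memA y : (y \in A) = (rcons y false \in K').
  rewrite mem_filter; case h: (rcons y false \in K') => //=; exact: inK h.
have memB y : (y \in B) = (rcons y true \in K').
  rewrite mem_filter; case h: (rcons y true \in K') => //=; exact: inK h.
have chA : forall u v, u \in A -> v \in A -> le u v || le v u.
  by move=> u v; rewrite !memA => hu hv; apply: chK; [apply: inK hu|apply: inK hv].
have chB : forall u v, u \in B -> v \in B -> le u v || le v u.
  by move=> u v; rewrite !memB => hu hv; apply: chK; [apply: inK hu|apply: inK hv].
have AB u v : u \in A -> v \in B -> le u v.
  rewrite memA memB => hu hv; case/orP: (ch _ _ hu hv); rewrite !le_rcons ?andbT ?andbF //.
have [w wC] : exists w, w \in C by case: (C) C0 => // a ? _; exists a; rewrite inE eqxx.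
have wS := CS wC.
have K'0 : K' != [::].
  apply/eqP => e; have wT : rcons w false \in T by rewrite memT wS /= C_D.
  suff : rcons w false \in K' by rewrite e.
  by apply: mx => // ?; rewrite e.
have AB0 : (A != [::]) || (B != [::]).
  have [w0 w0K] : exists w0, w0 \in K' by case: (K') K'0 => // a ? _; exists a; rewrite inE eqxx.
  case: (T_inv (sub _ w0K)) => y [b ew]; subst w0.
  case: b w0K => w0K /=.
    apply/orP; right; apply/eqP => eB.
    by have := memB y; rewrite eB w0K.
  apply/orP; left; apply/eqP => eA.
  by have := memA y; rewrite eA w0K.
case A0: (A == [::]); case B0: (B == [::]); rewrite ?A0 ?B0 // in AB0.
- have [y1 y1B hy1] := chain_min (negbT B0) chB.
  have y1S : y1 \in S by apply: KS; move: y1B; rewrite mem_filter => /andP[].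
  have zS := meet_in latS y1S wS.
  have zT : rcons (meet S y1 w) false \in T.
    by rewrite memT zS /=; apply: D_down (C_D wC) zS (meet_r latS y1S wS).
  have : meet S y1 w \in A.
    rewrite memA; apply: mx => // w' w'K.
    case: (T_inv (sub _ w'K)) => y' [b' ew']; subst w'.
    case: b' w'K => w'K.
      rewrite !le_rcons /= andbT; apply/orP; right.
      apply: le_trans (meet_l latS y1S wS) (hy1 _ _); by rewrite memB.
    by have := memA y'; rewrite (eqP A0) w'K.
  by rewrite (eqP A0).
- have [x0 x0A hx0] := chain_max (negbT A0) chA.
  have x0S : x0 \in S by apply: KS; move: x0A; rewrite mem_filter => /andP[].
  have zS := join_in latS x0S wS.
  have zT : rcons (join S x0 w) true \in T.
    by rewrite memT zS /=; apply: U_up (C_U wC) wS zS (join_r latS x0S wS).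
  have : join S x0 w \in B.
    rewrite memB; apply: mx => // w' w'K.
    case: (T_inv (sub _ w'K)) => y' [b' ew']; subst w'.
    case: b' w'K => w'K.
      by have := memB y'; rewrite (eqP B0) w'K.
    rewrite !le_rcons /= andbT; apply/orP; left.
    apply: le_trans (hx0 _ _) (join_l latS x0S wS); by rewrite memA.
  by rewrite (eqP B0).
have [x0 x0A hx0] := chain_max (negbT A0) chA.
have [y1 y1B hy1] := chain_min (negbT B0) chB.
have x0S : x0 \in S by apply: KS; move: x0A; rewrite mem_filter => /andP[].
have y1S : y1 \in S by apply: KS; move: y1B; rewrite mem_filter => /andP[].
have xy := AB _ _ x0A y1B.
case hU: (inU x0).
  exists x0; split; first by rewrite -memA.
  apply: mx; first by rewrite memT x0S.
  move=> w' w'K; case: (T_inv (sub _ w'K)) => y' [b' ew']; subst w'.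
  rewrite !le_rcons; case: b' w'K => w'K /=; rewrite ?andbT ?andbF ?orbF.
    by apply/orP; right; apply: le_trans xy (hy1 _ _); rewrite memB.
  by apply: hx0; rewrite memA.
exfalso.
have x0D : inD x0 by move: x0A; rewrite memA => /sub; rewrite memT => /andP[].
move: (x0D); rewrite inDP => /andP[_ /hasP[w' w'C x0w']].
have w'S := CS w'C.
have y1T : rcons y1 true \in K' by rewrite -memB.
have zU := lm1_meet (sub _ y1T) (lm _ y1T) w'C.
have zS := meet_in latS y1S w'S.
have x0z : le x0 (meet S y1 w') by apply: meet_max.
have zT : rcons (meet S y1 w') false \in T.
  by rewrite memT zS /=; apply: D_down (C_D w'C) zS (meet_r latS y1S w'S).
have : meet S y1 w' \in A.
  rewrite memA; apply: mx => // w'' w''K.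
  case: (T_inv (sub _ w''K)) => y' [b' ew']; subst w''.
  rewrite !le_rcons; case: b' w''K => w''K /=; rewrite ?andbT ?andbF ?orbF.
    by apply/orP; right; apply: le_trans (meet_l latS y1S w'S) (hy1 _ _); rewrite memB.
  by apply/orP; left; apply: le_trans (hx0 _ _) x0z; rewrite memA.
move=> /hx0 zx0.
by move: hU; rewrite (le_anti x0z zx0) zU.
Qed.

End Doubling.

Lemma Elat_rcons Cs C : Elat (rcons Cs C) = doubling (Elat Cs) C.
Proof. by rewrite /Elat foldl_rcons. Qed.

Lemma nth_rcons_lt (Cs : seq (seq elt)) C i : i < size Cs ->
  nth [::] (rcons Cs C) i = nth [::] Cs i.
Proof. by move=> hi; rewrite nth_rcons hi. Qed.

Lemma take_rcons_le (Cs : seq (seq elt)) C i : i <= size Cs ->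
  take i (rcons Cs C) = take i Cs.
Proof. by move=> hi; rewrite -cats1 takel_cat. Qed.

Lemma valid_rcons Cs C : valid_seq (rcons Cs C) ->
  valid_seq Cs /\ [/\ C != [::], {subset C <= Elat Cs} & convex (Elat Cs) C].
Proof.
move=> hv; split.
  move=> i hi; have hi' : i < size (rcons Cs C) by rewrite size_rcons ltnS ltnW.
  have := hv i hi'; rewrite nth_rcons_lt // take_rcons_le //; exact: ltnW.
have := hv (size Cs); rewrite size_rcons ltnSn => /(_ isT).
by rewrite nth_rcons ltnn eqxx -cats1 take_size_cat.
Qed.

Lemma lat_Elat Cs : valid_seq Cs -> lat (Elat Cs).
Proof.
elim/last_ind: Cs => [|Cs C IH] hv.
  by move=> x y; rewrite /Elat /= !inE => /eqP -> /eqP ->.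
have [hv' [_ _ cvx]] := valid_rcons hv.
rewrite Elat_rcons; exact: latT (IH hv') cvx.
Qed.

Theorem theorem3p12 (Cs : seq (seq elt)) :
  valid_seq Cs ->
  (left_modular_lattice (Elat Cs) <->
   (forall i, i < size Cs ->
      exists x K, x \in heart (nth [::] Cs i) /\
        maximal_left_modular_chain (Elat (take i Cs)) K /\ x \in K)).
Proof.
elim/last_ind: Cs => [|Cs C IH] hv.
  split => // _; exists [:: [::]]; split; [split; [split|] |].
  - by [].
  - by move=> x y; rewrite /Elat /= !inE => /eqP -> /eqP ->.
  - by [].
  - move=> a; rewrite inE => /eqP -> b c; rewrite /Elat /= !inE => /eqP -> /eqP ->.
    by rewrite /lt eqxx.
have [hv' [C0 CS cvx]] := valid_rcons hv.
have latS := lat_Elat hv'.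
rewrite Elat_rcons size_rcons; split.
  move=> hLM i; rewrite ltnS leq_eqVlt => /orP[/eqP ->|hi].
    rewrite nth_rcons ltnn eqxx -cats1 take_size_cat //.
    exact: key_fwd latS C0 CS cvx hLM.
  have [x [K [_ [hK _]]]] := key_fwd latS C0 CS cvx hLM.
  have := (proj1 (IH hv')) (ex_intro _ K hK) i hi.
  by rewrite nth_rcons_lt // take_rcons_le // ltnW.
move=> h; have := h (size Cs) (ltnSn _).
rewrite nth_rcons ltnn eqxx -cats1 take_size_cat // => -[x [K [hx [hK xK]]]].
exact (@key_bwd _ _ latS CS cvx x K hx hK xK).
Qed.
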